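(* Let $n \geq 1$ and $0 \le k \le n$. The number of Grassmannian permutations of $[n]$ with exactly $k$ fixed points is $1$ if $k = n$, $0$ if $k = n-1$, and $(k+1)2^{n-k-2}$ if $0 \le k \le n-2$.
   Context: A permutation $\pi = \pi_1\cdots\pi_n$ of $[n]=\{1,\dots,n\}$ (written in one-line notation) is Grassmannian if it has at most one descent, i.e. at most one index $i$ with $\pi_i > \pi_{i+1}$. A fixed point of $\pi$ is an $i \in [n]$ with $\pi_i = i$. *)

(* Defs.v *)
From mathcomp Require Import all_boot all_fingroup.
Local Open Scope nat_scope.
Set Implicit Arguments. Unset Strict Implicit. Unset Printing Implicit Defensive.

(* Permutations of [n] are modelled as s : 'S_n acting on 'I_n = {0,...,n-1};
   the shift i <-> i+1 preserves descents and fixed points. *)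

Definition descents n (s : 'S_n) : {set 'I_n} :=
  [set i : 'I_n | [exists j : 'I_n, (val j == (val i).+1) && (s j < s i)]].

Definition ndes n (s : 'S_n) : nat := #|descents s|.

Definition grassmannian n (s : 'S_n) : bool := ndes s <= 1.

Definition nfix n (s : 'S_n) : nat := #|[set i : 'I_n | s i == i]|.

Definition grass_fix_count (n k : nat) : nat :=
  #|[set s : 'S_n | grassmannian s && (nfix s == k)]|.

(* Main.v *)
Require Import Defs.
From mathcomp Require Import all_boot all_fingroup zify.
Set Implicit Arguments. Unset Strict Implicit. Unset Printing Implicit Defensive.
Lemma card_count n (P : pred nat) : #|[set z : 'I_n | P z]| = count P (iota 0 n).
Proof.
rewrite -(val_enum_ord n) count_map cardsE cardE -size_filter.
rewrite /enum_mem /= !size_filter count_filter; apply: eq_count => x /=; by rewrite andbT.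
Qed.
Lemma count_itv a b m : count (fun z => a <= z < b) (iota 0 m) = minn m b - a.
Proof.
elim: m => [|m IH]; first by rewrite minnC.
rewrite -addn1 iotaD count_cat IH /= addn0 add0n.
case: (leqP a m) => h1; case: (ltnP m b) => h2 /=; lia.
Qed.
Lemma card_itv n a b : b <= n -> #|[set z : 'I_n | a <= z < b]| = b - a.
Proof. by move=> hb; rewrite (card_count n (fun z => a <= z < b)) count_itv; congr (_ - _); lia. Qed.

Lemma lt_card_D1 (T : finType) (C D : {set T}) y :
  y \in D -> C \subset D :\ y -> #|C| < #|D|.
Proof.
move=> yD sub; rewrite (cardsD1 y D) yD add1n ltnS.
exact: subset_leq_card.
Qed.

Lemma card_sub_lt n (B : {set 'I_n}) (x : 'I_n) :
  x \in B -> #|[set z in B | z < x]| < #|B|.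
Proof.
move=> xB; apply: (lt_card_D1 xB); apply/subsetP => z; rewrite !inE.
by case/andP=> -> hz; rewrite andbT; apply/eqP => e; rewrite e ltnn in hz.
Qed.

Lemma card_lt_mono n (B : {set 'I_n}) (x y : 'I_n) :
  y \in B -> y < x -> #|[set z in B | z < y]| < #|[set z in B | z < x]|.
Proof.
move=> yB yx; apply: (@lt_card_D1 _ _ _ y); first by rewrite inE yB.
apply/subsetP => z; rewrite !inE => /andP[-> hz] /=.
rewrite (ltn_trans hz yx) andbT.
by apply/eqP => e; rewrite e ltnn in hz.
Qed.

Definition rk n (A : {set 'I_n}) (x : 'I_n) : nat :=
  if x \in A then #|[set z in A | z < x]| else #|A| + #|[set z in ~: A | z < x]|.

Lemma rk_ltA n (A : {set 'I_n}) x : x \in A -> rk A x < #|A|.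
Proof. by move=> xA; rewrite /rk xA; apply: card_sub_lt. Qed.

Lemma rk_geA n (A : {set 'I_n}) x : x \notin A -> #|A| <= rk A x.
Proof. by rewrite /rk => /negPf ->; apply: leq_addr. Qed.

Lemma rk_ltn n (A : {set 'I_n}) x : rk A x < n.
Proof.
case xA: (x \in A).
  apply: leq_trans (rk_ltA xA) _; apply: leq_trans (max_card _) _.
  by rewrite card_ord.
rewrite /rk xA; apply: (@leq_trans (#|A| + #|~: A|)); last by rewrite cardsC card_ord.
rewrite ltn_add2l.
by apply: card_sub_lt; rewrite inE xA.
Qed.

Lemma rk_mono n (A : {set 'I_n}) (x y : 'I_n) :
  (x \in A) = (y \in A) -> y < x -> rk A y < rk A x.
Proof.
rewrite /rk => e yx; rewrite e; case yA: (y \in A).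
  exact: card_lt_mono.
by rewrite ltn_add2l; apply: card_lt_mono; rewrite // inE yA.
Qed.

Lemma rk_inj n (A : {set 'I_n}) x y : rk A x = rk A y -> x = y.
Proof.
move=> e; case xA: (x \in A); case yA: (y \in A).
- case: (ltngtP x y) => h; last exact: val_inj.
  + by have := rk_mono (etrans yA (esym xA)) h; rewrite e ltnn.
  + by have := rk_mono (etrans xA (esym yA)) h; rewrite e ltnn.
- by have := rk_ltA xA; have := rk_geA (negbT yA); rewrite e; lia.
- by have := rk_ltA yA; have := rk_geA (negbT xA); rewrite e; lia.
- case: (ltngtP x y) => h; last exact: val_inj.
  + by have := rk_mono (etrans yA (esym xA)) h; rewrite e ltnn.
  + by have := rk_mono (etrans xA (esym yA)) h; rewrite e ltnn.
Qed.

Definition rko n (A : {set 'I_n}) x : 'I_n := Ordinal (rk_ltn A x).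
Lemma rko_inj n (A : {set 'I_n}) : injective (rko A).
Proof. by move=> x y /(congr1 val) /= /rk_inj. Qed.
Definition gA n (A : {set 'I_n}) : 'S_n := perm (@rko_inj n A).
Definition sA n (A : {set 'I_n}) : 'S_n := ((gA A)^-1)%g.
Lemma gAE n (A : {set 'I_n}) x : val (gA A x) = rk A x.
Proof. by rewrite /gA permE. Qed.
Lemma rk_sA n (A : {set 'I_n}) i : rk A (sA A i) = i.
Proof. by rewrite -gAE /sA permKV. Qed.

Lemma sA_des n (A : {set 'I_n}) (i j : 'I_n) :
  val j = i.+1 -> sA A j < sA A i -> i.+1 = #|A|.
Proof.
move=> ji yx; have hx := rk_sA A i; have hy := rk_sA A j.
case xA: (sA A i \in A); case yA: (sA A j \in A).
- by have := rk_mono (etrans xA (esym yA)) yx; rewrite hx hy ji; lia.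
- by have := rk_ltA xA; have := rk_geA (negbT yA); rewrite hx hy ji; lia.
- by have := rk_ltA yA; have := rk_geA (negbT xA); rewrite hx hy ji; lia.
- by have := rk_mono (etrans xA (esym yA)) yx; rewrite hx hy ji; lia.
Qed.

Lemma desP n (s : 'S_n) (i : 'I_n) :
  reflect (exists2 j : 'I_n, val j = i.+1 & s j < s i) (i \in descents s).
Proof.
rewrite inE; apply: (iffP existsP) => [[j /andP[/eqP e h]]|[j e h]].
  by exists j.
by exists j; rewrite e eqxx.
Qed.

Lemma sA_grass n (A : {set 'I_n}) : grassmannian (sA A).
Proof.
rewrite /grassmannian /ndes; apply/card_le1_eqP => i1 i2.
move=> /desP [j1 e1 h1] /desP [j2 e2 h2]; apply: val_inj.
have := sA_des e1 h1; have := sA_des e2 h2; move=> a b; apply: succn_inj; exact: (etrans a (esym b)).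
Qed.

Definition lead n (A : {set 'I_n}) :=
  #|[set x in A | [forall z : 'I_n, (z < x) ==> (z \in A)]]|.
Definition trail n (A : {set 'I_n}) :=
  #|[set x in ~: A | [forall z in A, z < x]]|.

Lemma card_lt_set n (x : 'I_n) : #|[set z : 'I_n | z < x]| = x.
Proof.
rewrite -[RHS]subn0 -(card_itv 0 (ltnW (ltn_ord x))).
by apply: eq_card => z; rewrite !inE.
Qed.

Lemma lead_cond n (A : {set 'I_n}) x :
  x \in A -> (rk A x == x) = [forall z : 'I_n, (z < x) ==> (z \in A)].
Proof.
move=> xA; rewrite /rk xA.
have sub : [set z in A | z < x] \subset [set z : 'I_n | z < x].
  by apply/subsetP => z; rewrite !inE => /andP[].
rewrite -{2}(card_lt_set x) (subset_leqif_cards sub).2.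
apply/eqP/forallP => [e z|h].
  apply/implyP => zx.
  have : z \in [set z : 'I_n | z < x] by rewrite inE.
  by rewrite -e inE => /andP[].
apply/setP => z; rewrite !inE; case zx: (z < x); rewrite ?andbT ?andbF //.
exact: (implyP (h z) zx).
Qed.

Lemma trail_cond n (A : {set 'I_n}) x :
  x \notin A -> (rk A x == x) = [forall z in A, z < x].
Proof.
move=> xA; rewrite /rk (negPf xA).
have hab : #|[set z in A | z < x]| + #|[set z in ~: A | z < x]| = x.
  rewrite -{3}(card_lt_set x) -(cardsID A [set z : 'I_n | z < x]).
  by congr (_ + _); apply: eq_card => z; rewrite !inE andbC.
have sub : [set z in A | z < x] \subset A.
  by apply/subsetP => z; rewrite !inE => /andP[].
rewrite -{2}hab eqn_add2r eq_sym (subset_leqif_cards sub).2.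
apply/eqP/forallP => [e z|h].
  apply/implyP => zA.
  by move: zA; rewrite -e inE => /andP[].
apply/setP => z; rewrite !inE; case zA: (z \in A) => //=.
exact: (implyP (h z) zA).
Qed.

Lemma nfix_sA n (A : {set 'I_n}) : nfix (sA A) = lead A + trail A.
Proof.
have e : [set i | sA A i == i] = [set x | rk A x == x].
  apply/setP => i; rewrite !inE; apply/eqP/eqP => [h|h].
    by rewrite -{1}h rk_sA.
  have : gA A i = i by apply: val_inj; rewrite /= gAE.
  by move=> {1}<-; rewrite /sA permK.
rewrite /nfix e -(cardsID A [set x | rk A x == x]) /lead /trail.
congr (_ + _); apply: eq_card => x; rewrite !inE.
  by case xA: (x \in A); rewrite ?andbT ?andbF // lead_cond.
by case xA: (x \in A); rewrite ?andbT ?andbF //= trail_cond ?xA.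
Qed.

Section Mono.
Variables (n : nat) (s : 'S_n) (c : nat).
Hypothesis H : forall i j : 'I_n, val j = i.+1 -> s j < s i -> i.+1 = c.

Lemma mono_step (i j : 'I_n) : val j = i.+1 -> (j < c) || (c <= i) -> s i < s j.
Proof.
move=> e cond; case: (ltngtP (s i) (s j)) => // h.
  by have := H e h; move: cond; rewrite e; lia.
have := perm_inj (val_inj h); move=> ij; move: e; rewrite ij /= => e; lia.
Qed.

Lemma mono_gen d : forall i j : 'I_n, val j = i + d.+1 -> (j < c) || (c <= i) -> s i < s j.
Proof.
elim: d => [|d IH] i j e cond; first by apply: mono_step => //; rewrite e addn1.
have kn : i + d.+1 < n by apply: leq_ltn_trans (ltn_ord j); rewrite e; lia.
pose k := Ordinal kn.
apply: (@ltn_trans (s k)).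
  by apply: IH => //=; move: cond; rewrite e /=; lia.
by apply: mono_step => /=; [rewrite e; lia | move: cond; rewrite e /=; lia].
Qed.

Lemma mono (i j : 'I_n) : i < j -> (j < c) || (c <= i) -> s i < s j.
Proof. move=> ij cond; apply: (@mono_gen (j - i).-1) => //=; by rewrite prednK ?subn_gt0 // subnKC // ltnW. Qed.

Lemma mono_iff (i j : 'I_n) : (j < c) = (i < c) -> (s j < s i) = (j < i).
Proof.
have cond1 : forall a b : 'I_n, (a < c) = (b < c) -> (a < c) || (c <= b).
  by move=> a b; case ac: (a < c) => //= /esym bc; rewrite leqNgt bc.
move=> e; case: (ltngtP j i) => h.
- by apply: mono => //; apply: cond1.
- apply/negbTE; rewrite -leqNgt; apply: ltnW; apply: mono => //.
  by apply: cond1.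
- by rewrite (val_inj h) ltnn.
Qed.
End Mono.

Lemma card_perm n (s : 'S_n) (P : pred 'I_n) :
  #|[set z | P z]| = #|[set j | P (s j)]|.
Proof.
rewrite -(card_preimset [set z | P z] (@perm_inj _ s)); apply: eq_card => j.
by rewrite !inE.
Qed.

Lemma sA_surj n (s : 'S_n) c (hc : c <= n)
  (H : forall i j : 'I_n, val j = i.+1 -> s j < s i -> i.+1 = c) :
  s = sA [set z | (s^-1)%g z < c].
Proof.
set A := [set z | (s^-1)%g z < c].
have hA : forall j, (s j \in A) = (j < c) by move=> j; rewrite inE permK.
have cA : #|A| = c.
  rewrite -(card_preimset A (@perm_inj _ s)) -[c]subn0 -(card_itv 0 hc).
  by apply: eq_card => j; rewrite !inE permK.
suff key : forall i, rk A (s i) = i.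
  apply/permP => z; have : gA A (s z) = z by apply: val_inj; rewrite /= gAE key.
  by move=> {2}<-; rewrite /sA permK.
move=> i; rewrite /rk hA; case ic: (i < c).
  rewrite (card_perm s (fun z => (z \in A) && (z < s i))) -(card_lt_set i).
  apply: eq_card => j; rewrite !inE permK; case jc: (j < c) => /=.
    by rewrite (mono_iff H) // ic.
  by apply/esym/negbTE; move: ic jc; lia.
rewrite cA (card_perm s (fun z => (z \in ~: A) && (z < s i))).
rewrite -(subnKC (_ : c <= i)); last by move: ic; lia.
congr (_ + _); rewrite -(card_itv c (ltnW (ltn_ord i))).
apply: eq_card => j; rewrite !inE permK; case jc: (j < c) => /=.
  by apply/esym/negbTE; move: jc; lia.
by rewrite (mono_iff H) ?ic ?jc //; move: jc; case: leqP.
Qed.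

Definition initial n (A : {set 'I_n}) := A == [set x : 'I_n | x < #|A|].

Lemma memA_rk n (A : {set 'I_n}) x : (x \in A) = (rk A x < #|A|).
Proof. by case xA: (x \in A); [rewrite rk_ltA | rewrite ltnNge rk_geA ?xA]. Qed.

Lemma sA_1 n (A : {set 'I_n}) : (forall x, rk A x = x) -> sA A = 1%g.
Proof.
move=> h; apply/permP => i; rewrite perm1.
have : gA A i = i by apply: val_inj; rewrite /= gAE h.
by move=> {1}<-; rewrite /sA permK.
Qed.

Lemma sA_init n (A : {set 'I_n}) : initial A -> sA A = 1%g.
Proof.
move=> /eqP eA; have memA : forall z, (z \in A) = (z < #|A|).
  by move=> z; rewrite {1}eA inE.
apply: sA_1 => x; rewrite /rk; case xA: (x \in A).
  rewrite -[RHS](card_lt_set x); apply: eq_card => z; rewrite !inE memA.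
  case zx: (z < x); rewrite ?andbT ?andbF //.
  by move: xA; rewrite memA; move: zx; lia.
have xm : #|A| <= x by move: xA; rewrite memA; lia.
rewrite -[RHS](subnKC xm); congr (_ + _).
rewrite -(card_itv #|A| (ltnW (ltn_ord x))); apply: eq_card => z.
by rewrite !inE memA -leqNgt.
Qed.

Lemma sA_eq1_init n (A : {set 'I_n}) : sA A = 1%g -> initial A.
Proof.
move=> e; have h : forall x, rk A x = x.
  by move=> x; rewrite -[RHS](rk_sA A x) e perm1.
apply/eqP/setP => x; rewrite inE memA_rk h; done.
Qed.

Lemma no_des_id n (s : 'S_n) : descents s = set0 -> s = 1%g.
Proof.
move=> d0; rewrite (@sA_surj n s 0) //.
  apply: sA_init; apply/eqP/setP => x; rewrite !inE.
  have -> : [set z | (s^-1)%g z < 0] = set0 by apply/setP => z; rewrite !inE.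
  by rewrite cards0.
move=> i j e h; have : i \in descents s by apply/desP; exists j.
by rewrite d0 inE.
Qed.

Lemma grass_c n (s : 'S_n) : grassmannian s ->
  exists2 c, c <= n & forall i j : 'I_n, val j = i.+1 -> s j < s i -> i.+1 = c.
Proof.
rewrite /grassmannian /ndes leq_eqVlt ltnS leqn0 => /orP[/cards1P [d ed]|].
  exists d.+1; first exact: ltn_ord.
  move=> i j e h; have : i \in descents s by apply/desP; exists j.
  by rewrite ed inE => /eqP ->.
move=> /eqP/cards0_eq d0; exists 0 => // i j e h.
have : i \in descents s by apply/desP; exists j.
by rewrite d0 inE.
Qed.

Lemma sA_card_des n (A : {set 'I_n}) : ~~ initial A ->
  exists i : 'I_n, i.+1 = #|A|.
Proof.
move=> ni; case: (set_0Vmem (descents (sA A))) => [d0|[i /desP [j e h]]].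
  by move: ni; rewrite (sA_eq1_init (no_des_id d0)).
by exists i; apply: sA_des e h.
Qed.

Lemma sA_inj_NI n (A B : {set 'I_n}) : ~~ initial A -> ~~ initial B ->
  sA A = sA B -> A = B.
Proof.
move=> nA nB e.
have eg : forall x, rk A x = rk B x.
  by move=> x; rewrite -!gAE; congr val; rewrite (invg_inj e).
have ec : #|A| = #|B|.
  case: (set_0Vmem (descents (sA A))) => [d0|[i /desP [j e1 h]]].
    by move: nA; rewrite (sA_eq1_init (no_des_id d0)).
  have := sA_des e1 h; rewrite e in h; have := sA_des e1 h.
  by move=> <- <-.
by apply/setP => x; rewrite !memA_rk eg ec.
Qed.

Lemma leadE n (A : {set 'I_n}) r : r <= n ->
  (forall x : 'I_n, x < r -> x \in A) -> (forall x : 'I_n, val x = r -> x \notin A) ->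
  lead A = r.
Proof.
move=> hr h1 h2; rewrite /lead -[RHS]subn0 -(card_itv 0 hr).
apply: eq_card => x; rewrite !inE /=.
case xr: (x < r).
  rewrite h1 //=; apply/forallP => z; apply/implyP => zx; apply: h1.
  exact: ltn_trans zx xr.
case: (eqVneq (nat_of_ord x) r) => [e|ne].
  by rewrite (negPf (h2 _ e)).
have rn : r < n by apply: leq_trans (ltn_ord x); move: xr ne; lia.
apply/negbTE/negP => /andP[_ /forallP /(_ (Ordinal rn)) /implyP].
have -> : Ordinal rn < x by rewrite /=; move: xr ne; lia.
by move=> /(_ isT); rewrite (negPf (h2 (Ordinal rn) erefl)).
Qed.

Lemma trailE n (A : {set 'I_n}) t : t <= n ->
  (forall x : 'I_n, n <= x + t -> x \notin A) ->
  (forall x : 'I_n, x.+1 + t = n -> x \in A) ->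
  trail A = t.
Proof.
move=> ht h1 h2.
rewrite /trail -[RHS](subKn ht) -(card_itv (n - t) (leqnn n)).
apply: eq_card => x; rewrite !inE /= ltn_ord andbT.
case xt: (n <= x + t).
  rewrite h1 //= (_ : n - t <= x); last by move: xt; lia.
  apply/forallP => z; apply/implyP => zA.
  case zt: (n <= z + t); first by rewrite (negPf (h1 _ zt)) in zA.
  by move: xt zt; lia.
rewrite (_ : n - t <= x = false); last by move: xt; lia.
case: (eqVneq (x.+1 + t) n) => [e|ne].
  by rewrite h2.
have yn : n - t.+1 < n by move: xt; lia.
apply/negbTE/negP => /andP[_ /forallP /(_ (Ordinal yn)) /implyP].
rewrite h2 /=; last by move: xt; lia.
by move=> /(_ isT); move: xt ne; lia.
Qed.

Lemma decomp n (A : {set 'I_n}) : exists r t,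
  [/\ r <= n, t <= n,
    (forall x : 'I_n, x < r -> x \in A),
    (forall x : 'I_n, val x = r -> x \notin A) &
    (forall x : 'I_n, n <= x + t -> x \notin A) /\
    (forall x : 'I_n, x.+1 + t = n -> x \in A)].
Proof.
pose P r := (n <= r) || [exists x : 'I_n, (val x == r) && (x \notin A)].
pose Q t := (n <= t) || [exists x : 'I_n, (x.+1 + t == n) && (x \in A)].
have exP : exists r, P r by exists n; rewrite /P leqnn.
have exQ : exists t, Q t by exists n; rewrite /Q leqnn.
case: (ex_minnP exP) => r Pr minP.
case: (ex_minnP exQ) => t Qt minQ.
have rn : r <= n by apply: minP; rewrite /P leqnn.
have tn : t <= n by apply: minQ; rewrite /Q leqnn.
exists r, t; split => //.
- move=> x xr; apply/negPn/negP => xA.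
  have : P x by apply/orP; right; apply/existsP; exists x; rewrite eqxx xA.
  by move/minP; rewrite leqNgt xr.
- move=> x e; move: Pr; rewrite /P -e leqNgt ltn_ord /= => /existsP [y /andP [/eqP ey yA]].
  by rewrite -(val_inj ey).
split.
- move=> x xt; apply/negP => xA.
  have : Q (n - x.+1).
    by apply/orP; right; apply/existsP; exists x; rewrite xA andbT; apply/eqP; move: (ltn_ord x); lia.
  by move/minQ; move: xt (ltn_ord x); lia.
- move=> x e; move: Qt; rewrite /Q (_ : n <= t = false); last by move: e; lia.
  move=> /existsP [y /andP [/eqP ey yA]].
  by have -> : x = y by apply: val_inj; move: e ey => /=; lia.
Qed.

Definition Dp n r t := [set x : 'I_n | (x <= r) || (n <= x + t.+1)].
Definition Ep n r t := [set x : 'I_n | (x < r) || (x.+1 + t == n)].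

Lemma init_of n (A : {set 'I_n}) r t : r <= n ->
  (forall x : 'I_n, x < r -> x \in A) -> (forall x : 'I_n, val x = r -> x \notin A) ->
  (forall x : 'I_n, n <= x + t -> x \notin A) -> n < r + t + 2 -> initial A.
Proof.
move=> hr h1 h2 h3 hb.
have eA : A = [set x : 'I_n | x < r].
  apply/setP => x; rewrite inE; case xr: (x < r); first exact: h1.
  case: (eqVneq (nat_of_ord x) r) => [e|ne]; first exact/negbTE/h2.
  by apply/negbTE/h3; move: xr ne hb; lia.
have cA : #|A| = r.
  by rewrite eA -[RHS]subn0 -(card_itv 0 hr); apply: eq_card => x; rewrite !inE.
by rewrite /initial cA {1}eA.
Qed.

Lemma pattern_of n (A : {set 'I_n}) r t : r + t + 2 <= n ->
  (forall x : 'I_n, x < r -> x \in A) -> (forall x : 'I_n, val x = r -> x \notin A) ->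
  (forall x : 'I_n, n <= x + t -> x \notin A) ->
  (forall x : 'I_n, x.+1 + t = n -> x \in A) -> A :&: Dp n r t = Ep n r t.
Proof.
move=> hb h1 h2 h3 h4; apply/setP => x; rewrite !inE.
case xr: (x < r).
  by rewrite h1 //= (ltnW xr).
case: (eqVneq (nat_of_ord x) r) => [e|ne].
  rewrite (negPf (h2 _ e)) /=; apply/esym/negbTE; move: e hb; lia.
case xt: (n <= x + t).
  rewrite (negPf (h3 _ xt)) /=; apply/esym/negbTE; move: xt; lia.
case: (eqVneq (x.+1 + t) n) => [e|ne2].
  by rewrite h4 //=; apply/orP; right; move: e; lia.
rewrite orbF /=; apply/negbTE; rewrite negb_and; apply/orP; right.
by move: xr ne xt ne2; lia.
Qed.

Lemma HL_of_pattern n (A : {set 'I_n}) r t : r + t + 2 <= n ->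
  A :&: Dp n r t = Ep n r t ->
  [/\ (forall x : 'I_n, x < r -> x \in A), (forall x : 'I_n, val x = r -> x \notin A),
    (forall x : 'I_n, n <= x + t -> x \notin A) &
    (forall x : 'I_n, x.+1 + t = n -> x \in A)].
Proof.
move=> hb /setP e; split => x h.
- by have := e x; rewrite !inE (ltnW h) h /= andbT.
- have := e x; rewrite !inE /= h leqnn ltnn /= andbT => ->.
  by apply/negP => /eqP; move: hb; lia.
- have := e x; rewrite !inE /=.
  rewrite (_ : n <= x + t.+1); last by move: h; lia.
  rewrite orbT andbT => ->; apply/negP => /orP[|/eqP]; move: h hb; lia.
- have := e x; rewrite !inE /=.
  rewrite (_ : n <= x + t.+1); last by move: h; lia.
  by rewrite orbT andbT h eqxx orbT.
Qed.

Lemma pattern_char n (A : {set 'I_n}) r t : r + t + 2 <= n ->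
  (A :&: Dp n r t == Ep n r t) = [&& ~~ initial A, lead A == r & trail A == t].
Proof.
move=> hb; apply/eqP/idP => [e|/and3P [ni /eqP lr /eqP tr]].
  have [h1 h2 h3 h4] := HL_of_pattern hb e.
  rewrite (leadE _ h1 h2) ?(trailE _ h3 h4) ?eqxx ?andbT; try by move: hb; lia.
  apply/negP => /eqP eA.
  have yn : n - t.+1 < n by move: hb; lia.
  have := h4 (Ordinal yn) ltac:(rewrite /=; move: hb; lia).
  rewrite {1}eA inE => hy.
  have rn : r < n by move: hb; lia.
  have := h2 (Ordinal rn) erefl; rewrite {1}eA inE /= => /negP; apply.
  by apply: leq_trans hy; rewrite /=; move: hb; lia.
have [r' [t' [hr ht h1 h2 [h3 h4]]]] := decomp A.
have e1 := leadE hr h1 h2; have e2 := trailE ht h3 h4.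
move: lr tr; rewrite e1 e2 => lr tr; subst r' t'.
rewrite -lr -tr; rewrite -lr -tr in hb; exact: (pattern_of hb h1 h2 h3 h4).
Qed.

Lemma noninit_bound n (A : {set 'I_n}) : ~~ initial A -> lead A + trail A + 2 <= n.
Proof.
move=> ni; have [r [t [hr ht h1 h2 [h3 h4]]]] := decomp A.
rewrite (leadE hr h1 h2) (trailE ht h3 h4).
case: (leqP (r + t + 2) n) => // hb.
by move: ni; rewrite (init_of hr h1 h2 h3 hb).
Qed.

Lemma card_pattern (T : finType) (D E : {set T}) : E \subset D ->
  #|[set A : {set T} | A :&: D == E]| = 2 ^ #|~: D|.
Proof.
move=> /subsetP ED; rewrite -card_powerset.
have -> : [set A : {set T} | A :&: D == E] = [set B :|: E | B in powerset (~: D)].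
  apply/setP => A; rewrite inE; apply/eqP/imsetP => [e|[B hB ->]].
    exists (A :\: D); first by rewrite inE; apply/subsetP => x; rewrite !inE => /andP[].
    by rewrite -e setUC setID.
  move: hB; rewrite inE => /subsetP hB; apply/setP => x; rewrite !inE.
  case xE: (x \in E); first by rewrite orbT ED.
  case xB: (x \in B) => //=; have := hB x xB; rewrite inE => /negPf -> //.
apply: card_in_imset => B1 B2; rewrite !inE => /subsetP h1 /subsetP h2 e.
apply/setP => x; have := congr1 (fun S : {set T} => x \in S) e; rewrite /= !inE.
case x1: (x \in B1); case x2: (x \in B2) => //=.
- have := h1 x x1; rewrite inE => /negPf xD.
  by case xE: (x \in E) => //; rewrite ED in xD.
- have := h2 x x2; rewrite inE => /negPf xD.
  by case xE: (x \in E) => //; rewrite ED in xD.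
Qed.

Lemma card_Dp_compl n r t : r + t + 2 <= n -> #|~: Dp n r t| = n - (r + t) - 2.
Proof.
move=> hb; have hle : n - t.+1 <= n by lia.
rewrite -[n - (r + t) - 2](_ : n - t.+1 - r.+1 = _); last by lia.
rewrite -(card_itv r.+1 hle); apply: eq_card => x; rewrite !inE negb_or -!ltnNge.
apply/andP/andP => [[a b]|[a b]]; split => //; move: b; lia.
Qed.

Lemma Ep_sub n r t : r + t + 2 <= n -> Ep n r t \subset Dp n r t.
Proof.
move=> hb; apply/subsetP => x; rewrite !inE => /orP[h|/eqP h].
  by rewrite (ltnW h).
by apply/orP; right; move: h hb; lia.
Qed.

Definition NI n k := [set A : {set 'I_n} | ~~ initial A && (lead A + trail A == k)].

Lemma card_NI n k : #|NI n k| = if k + 2 <= n then k.+1 * 2 ^ (n - k - 2) else 0.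
Proof.
case: (leqP (k + 2) n) => hk; last first.
  apply/eqP; rewrite cards_eq0; apply/eqP/setP => A; rewrite !inE.
  apply/negbTE; apply/negP => /andP [ni /eqP e].
  by have := noninit_bound ni; rewrite e; lia.
have step : forall A, A \in NI n k -> \sum_(r < k.+1) (lead A == r) = 1.
  move=> A; rewrite inE => /andP [_ /eqP e].
  have lk : lead A < k.+1 by lia.
  rewrite (bigD1 (Ordinal lk)) //= eqxx big1 // => i ne.
  apply/eqP; rewrite eqb0; apply/eqP => e2; move/eqP: ne; apply; apply: val_inj => /=.
  by rewrite e2.
rewrite -sum1_card -(eq_bigr _ step) exchange_big /=.
rewrite -[k.+1 in RHS]card_ord -sum_nat_const; apply: eq_bigr => r _.
rewrite (eq_bigr (fun A => if lead A == r then 1 else 0)); last by move=> A _; case: eqP.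
rewrite -big_mkcondr sum1_card.
have hb : r + (k - r) + 2 <= n by have := ltn_ord r; lia.
rewrite -(_ : n - (r + (k - r)) - 2 = n - k - 2); last by have := ltn_ord r; lia.
rewrite -(card_Dp_compl hb) -(card_pattern (Ep_sub hb)).
apply: eq_card => A; rewrite [in RHS]inE pattern_char // -topredE /= inE.
case: (eqVneq (lead A) r) => [e|ne]; last by rewrite andbF /= andbF.
rewrite e andbT /=; congr (_ && _); apply/eqP/eqP; have := ltn_ord r; lia.
Qed.

Lemma grass1 n : grassmannian (1%g : 'S_n).
Proof.
rewrite /grassmannian /ndes (_ : descents (1%g : 'S_n) = set0) ?cards0 //.
apply/setP => i; rewrite !inE; apply/negbTE/existsP => [[j /andP[/eqP e]]].
by rewrite !perm1 ltnNge e leqnSn.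
Qed.

Lemma nfix1 n : nfix (1%g : 'S_n) = n.
Proof.
rewrite /nfix -[RHS](card_ord n) -cardsT; apply: eq_card => i.
by rewrite !inE perm1 eqxx.
Qed.

Theorem mainTheorem1 (n k : nat) (hn : 1 <= n) (hk : k <= n) :
  grass_fix_count n k =
    (if k == n then 1
     else if k == n.-1 then 0
     else k.+1 * 2 ^ (n - k - 2)).
Proof.
set G := [set s : 'S_n | grassmannian s && (nfix s == k)].
have c1 : #|G :&: [set 1%g]| = (k == n).
  case: (eqVneq k n) => [e|ne].
    rewrite [RHS]/= -(cards1 (1%g : 'S_n)); apply: eq_card => s; rewrite !inE.
    by case: (eqVneq s 1%g) => [->|]; rewrite ?andbT ?andbF // grass1 nfix1 e eqxx.
  apply/eqP; rewrite cards_eq0; apply/eqP/setP => s; rewrite !inE.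
  case: (eqVneq s 1%g) => [->|]; rewrite ?andbT ?andbF // nfix1.
  by rewrite eq_sym (negPf ne) andbF.
have eD : G :\: [set 1%g] = (@sA n) @: NI n k.
  apply/setP => s; rewrite !inE; apply/andP/imsetP.
    move=> [ns /andP[gs /eqP fs]]; have [c hc H] := grass_c gs.
    have e := sA_surj hc H; exists [set z | (s^-1)%g z < c] => //.
    rewrite inE -nfix_sA -e fs eqxx andbT; apply/negP => /sA_init e1.
    by move: ns; rewrite e e1 eqxx.
  move=> [A hA ->]; move: hA; rewrite inE => /andP [ni /eqP lt]; split.
    by apply/negP => /eqP /sA_eq1_init; apply/negP.
  by rewrite sA_grass nfix_sA lt eqxx.
rewrite /grass_fix_count -/G -(cardsID [set 1%g] G) c1 eD card_in_imset; last first.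
  by move=> A B; rewrite !inE => /andP[nA _] /andP[nB _]; apply: sA_inj_NI.
rewrite card_NI.
case: (eqVneq k n) => [->|ne] /=; first by rewrite (_ : n + 2 <= n = false) //; lia.
case: (eqVneq k n.-1) => [e|ne2] /=.
  by rewrite (_ : k + 2 <= n = false) //; lia.
by rewrite (_ : k + 2 <= n = true) //; move: ne ne2 hk hn; lia.
Qed.
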